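(* Let $X$ be a finite connected quandle. Then its type $t_X$ divides $|\mathrm{Inn}(X)|/|X|$.
   Context: A quandle is a set $X$ with a binary operation $\lhd$ such that $a\lhd a=a$ for all $a$, each map $x\mapsto x\lhd a$ is a bijection of $X$, and $(a\lhd b)\lhd c=(a\lhd c)\lhd(b\lhd c)$ for all $a,b,c$. The adjoint group $\mathrm{As}(X)$ is the group with generators $e_x$ ($x\in X$) and relations $e_{x\lhd y}=e_y^{-1}e_xe_y$. It acts on $X$ from the right by $x\cdot e_y=x\lhd y$; $X$ is connected if this action is transitive; $\mathrm{Inn}(X)\subset\mathfrak S_X$ is the image of the corresponding homomorphism $\mathrm{As}(X)\to\mathfrak S_X$. $x\lhd^N y$ denotes the $N$-fold application of $\bullet\lhd y$ to $x$; the type $t_X$ is the smallest positive integer $N$ with $x\lhd^N y=x$ for all $x,y\in X$ (it exists for finite $X$). *)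

(* Defs.v *)
From mathcomp Require Import all_boot all_fingroup.
Set Implicit Arguments. Unset Strict Implicit. Unset Printing Implicit Defensive.
Local Open Scope group_scope.

(* A quandle structure on a finite type T, given by the operation op x y = x <| y. *)
Definition is_quandle (T : finType) (op : T -> T -> T) : Prop :=
  [/\ (forall a : T, op a a = a),
      (forall a : T, bijective (fun x => op x a)) &
      (forall a b c : T, op (op a b) c = op (op a c) (op b c))].

(* Inn(X): the subgroup of Sym(X) generated by the right translations x |-> x <| y,
   i.e. the image of As(X) -> Sym(X). *)
Definition Inn (T : finType) (op : T -> T -> T) : {group {perm T}} :=
  <<[set p : {perm T} | [exists y : T, [forall x : T, p x == op x y]]]>>%G.

Definition connected_quandle (T : finType) (op : T -> T -> T) : Prop :=
  forall x y : T, exists2 g, g \in Inn op & g x = y.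

Definition type_annihilates (T : finType) (op : T -> T -> T) (N : nat) : Prop :=
  forall x y : T, iter N (fun z => op z y) x = x.

Definition is_quandle_type (T : finType) (op : T -> T -> T) (N : nat) : Prop :=
  [/\ 0 < N, type_annihilates op N &
      forall M, 0 < M -> type_annihilates op M -> N <= M].

(* Main.v *)
Require Import Defs.
From mathcomp Require Import all_boot all_fingroup all_solvable.
Set Implicit Arguments. Unset Strict Implicit. Unset Printing Implicit Defensive.
Local Open Scope group_scope.

Section S.
Variables (T : finType) (op : T -> T -> T).
Hypothesis Q : is_quandle op.

Lemma Rinj y : injective (fun x => op x y).
Proof. by case: Q => _ hb _; apply: bij_inj; apply: hb. Qed.

Definition R y : {perm T} := perm (@Rinj y).

Lemma RE y x : R y x = op x y.
Proof. by rewrite permE. Qed.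

Lemma R_Inn y : R y \in Inn op.
Proof.
apply: mem_gen; rewrite inE; apply/existsP; exists y; apply/forallP => x.
by rewrite RE.
Qed.

Definition Aut_set := [set p : {perm T} | [forall a, forall b, p (op a b) == op (p a) (p b)]].

Lemma Aut_group_set : group_set Aut_set.
Proof.
apply/group_setP; split.
  by rewrite inE; apply/forallP => a; apply/forallP => b; rewrite !perm1.
move=> p q; rewrite !inE => /forallP hp /forallP hq.
apply/forallP => a; apply/forallP => b; rewrite !permM.
move/forallP: (hp a) => /(_ b) /eqP ->.
by move/forallP: (hq (p a)) => /(_ (p b)) /eqP ->.
Qed.

Definition AutG : {group {perm T}} := Group Aut_group_set.

Lemma Inn_Aut : Inn op \subset AutG.
Proof.
rewrite gen_subG; apply/subsetP => p; rewrite !inE => /existsP [y /forallP hy].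
apply/forallP => a; apply/forallP => b.
rewrite !(eqP (hy _)).
by case: Q => _ _ ->.
Qed.

Lemma RJ g y : g \in Inn op -> R (g y) = (R y) ^ g.
Proof.
move=> /(subsetP Inn_Aut); rewrite inE => /forallP hg.
apply/permP => x; rewrite /conjg !permM !RE.
move/forallP: (hg (g^-1 x)) => /(_ y) /eqP ->.
by rewrite -permM mulVg perm1.
Qed.

End S.

Theorem lemma3p6 (T : finType) (op : T -> T -> T) (N : nat) :
  is_quandle op -> connected_quandle op -> is_quandle_type op N ->
  N %| #|Inn op| %/ #|T|.
Proof.
move=> Q C [N0 HN Hmin].
case: (pickP T) => [x0 _|e]; last first.
  by rewrite (eq_card0 e) divn0 dvdn0.
have ordR y : #[R Q y] = #[R Q x0].
  case: (C x0 y) => g gI <-; by rewrite RJ // orderJ.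
have HNo : N = #[R Q x0].
  apply/eqP; rewrite eqn_leq; apply/andP; split.
    apply: Hmin; first exact: order_gt0.
    move=> x y; rewrite -(ordR y).
    have := permX (R Q y) x #[R Q y]; rewrite expg_order perm1.
    move=> h; rewrite {2}h; apply: eq_iter => z; by rewrite RE.
  apply: dvdn_leq => //; rewrite order_dvdn; apply/eqP/permP => x.
  rewrite permX perm1.
  rewrite -{2}(HN x x0); apply: eq_iter => z; by rewrite RE.
have orb : orbit 'P (Inn op) x0 = [set: T].
  apply/setP => y; rewrite inE; apply/orbitP.
  by case: (C x0 y) => g gI gy; exists g.
have := card_orbit_stab 'P (Inn op) x0; rewrite orb cardsT => <-.
rewrite mulKn; last by apply/card_gt0P; exists x0.
rewrite HNo; apply: cardSg; rewrite cycle_subG inE R_Inn /=.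
apply/astab1P => /=; rewrite /aperm RE; by case: (Q) => -> _ _.
Qed.
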